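(* Let $n\ge1$ and $d\geq 0$. For every homogeneous polynomial representation $(\sigma,U)$ of $\mathrm{GL}_n(\mathbf C)$ of degree $d$ and every finite-dimensional complex representation $(\rho,V)$ of $S_n$, there is an isomorphism \[ \mathrm{Hom}_{\mathrm{GL}_n(\mathbf C)}(U,\mathrm{Ind}^dV)\cong\mathrm{Hom}_{S_n}(\mathrm{Res}^dU,V), \] natural in $U$ and $V$; that is, the functor $\mathrm{Ind}^d:\mathrm{Rep}\,S_n\to\mathrm{Rep}^d\,\mathrm{GL}_n(\mathbf C)$ is right adjoint to $\mathrm{Res}^d$.
   Context: $S_n$ is regarded as the subgroup of permutation matrices in $\mathrm{GL}_n(\mathbf C)$. A polynomial representation $\rho:\mathrm{GL}_n(\mathbf C)\to\mathrm{GL}(W)$ on a finite-dimensional space is one whose matrix entries are polynomials in the entries of $g$; it is homogeneous of degree $d$ if these polynomials are all homogeneous of degree $d$. $\mathrm{Rep}^d\,\mathrm{GL}_n(\mathbf C)$ is the category of such representations, $\mathrm{Rep}\,S_n$ the category of finite-dimensional complex representations of $S_n$, and $\mathrm{Res}^d$ sends $\rho$ to $\rho|_{S_n}$. Let $M_n$ be the space of $n\times n$ complex matrices and $P^d(M_n)$ the space of homogeneous polynomials of degree $d$ in the entries of $Q\in M_n$; $P^d(M_n)\otimes V$ is viewed as the space of $V$-valued homogeneous degree-$d$ polynomial functions on $M_n$. For $(\rho,V)\in\mathrm{Rep}\,S_n$, define \[ \mathrm{Ind}^dV=\{f\in P^d(M_n)\otimes V: f(wQ)=\rho(w)f(Q)\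 \text{for all }w\in S_n,\ Q\in M_n\}, \] with $\mathrm{GL}_n(\mathbf C)$-action $(\mathrm{Ind}^d\rho(g)f)(Q)=f(Qg)$; this is an object of $\mathrm{Rep}^d\,\mathrm{GL}_n(\mathbf C)$. For $\phi\in\mathrm{Hom}_{S_n}(V,W)$, $(\mathrm{Ind}^d\phi f)(Q)=\phi(f(Q))$. *)

(* Defs.v *)
From HB Require Import structures.
From mathcomp Require Import all_boot all_order all_algebra all_fingroup.
From mathcomp Require Import mpoly.
From mathcomp Require Export complex.
From mathcomp Require Export reals.

Set Implicit Arguments.
Unset Strict Implicit.
Unset Printing Implicit Defensive.

Import GRing.Theory.
Local Open Scope ring_scope.

Section Defs.
Variable C : fieldType.
Variable n d : nat.

Definition mx_vars (Q : 'M[C]_n) : 'I_(n * n) -> C := fun k => mxvec Q 0 k.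

Definition is_hpoly_fun (f : 'M[C]_n -> C) : Prop :=
  exists p : {mpoly C[n * n]}, p \is d.-homog /\ forall Q, f Q = p.@[mx_vars Q].

(* Objects of Rep^d GL_n(C): a finite-dimensional space C^m (column vectors)
   with a homogeneous polynomial representation of degree d.  gl_act is the
   polynomial map M_n -> M_m whose entries are the polynomials; it is a group
   homomorphism on GL_n. *)
Record glrep := GLRep {
  gl_dim : nat;
  gl_act : 'M[C]_n -> 'M[C]_gl_dim;
  gl_poly : forall i j, is_hpoly_fun (fun g => gl_act g i j);
  gl_act1 : gl_act 1%:M = 1%:M;
  gl_actM : forall g h, g \in unitmx -> h \in unitmx ->
              gl_act (g *m h) = gl_act g *m gl_act h }.

Record snrep := SnRep {
  sn_dim : nat;
  sn_act : 'S_n -> 'M[C]_sn_dim;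
  sn_act1 : sn_act 1%g = 1%:M;
  sn_actM : forall s t, sn_act (s * t)%g = sn_act s *m sn_act t }.

(* S_n is identified with the permutation matrices (perm_mx is a group
   homomorphism, perm_mxM); Res^d U is the action  s |-> gl_act U (perm_mx s). *)
Definition res_act (U : glrep) (s : 'S_n) : 'M[C]_(gl_dim U) :=
  gl_act U (perm_mx s).

(* Linear maps C^a -> C^b are b x a matrices acting on column vectors. *)

Definition homGL (U' U : glrep) (A : 'M[C]_(gl_dim U, gl_dim U')) : Prop :=
  forall g, g \in unitmx -> A *m gl_act U' g = gl_act U g *m A.

Definition homSn (V V' : snrep) (B : 'M[C]_(sn_dim V', sn_dim V)) : Prop :=
  forall s, B *m sn_act V s = sn_act V' s *m B.

Definition homSn_res (U : glrep) (V : snrep) (B : 'M[C]_(sn_dim V, gl_dim U)) :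
  Prop := forall s, B *m res_act U s = sn_act V s *m B.

Definition in_Ind (V : snrep) (f : 'M[C]_n -> 'cV[C]_(sn_dim V)) : Prop :=
  (forall i, is_hpoly_fun (fun Q => f Q i 0)) /\
  (forall s Q, f (perm_mx s *m Q) = sn_act V s *m f Q).

Definition ind_act (V : snrep) (g : 'M[C]_n) (f : 'M[C]_n -> 'cV[C]_(sn_dim V))
  : 'M[C]_n -> 'cV[C]_(sn_dim V) := fun Q => f (Q *m g).

Definition ind_map (V V' : snrep) (B : 'M[C]_(sn_dim V', sn_dim V))
  (f : 'M[C]_n -> 'cV[C]_(sn_dim V)) : 'M[C]_n -> 'cV[C]_(sn_dim V') :=
  fun Q => B *m f Q.

Definition IndMap (U : glrep) (V : snrep) : Type :=
  'cV[C]_(gl_dim U) -> 'M[C]_n -> 'cV[C]_(sn_dim V).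

Definition homGL_Ind (U : glrep) (V : snrep) (T : IndMap U V) : Prop :=
  [/\ forall (a : C) u v Q, T (a *: u + v) Q = a *: T u Q + T v Q,
      forall u, in_Ind (T u)
    & forall g u, g \in unitmx -> forall Q,
        T (gl_act U g *m u) Q = ind_act g (T u) Q ].

Definition indmap_comb (U : glrep) (V : snrep) (a : C) (T1 T2 : IndMap U V)
  : IndMap U V := fun u Q => a *: T1 u Q + T2 u Q.

Definition indmap_comp (U' U : glrep) (V V' : snrep)
  (A : 'M[C]_(gl_dim U, gl_dim U')) (B : 'M[C]_(sn_dim V', sn_dim V))
  (T : IndMap U V) : IndMap U' V' :=
  fun u' => ind_map B (T (A *m u')).

End Defs.

(* Main.v *)
Require Import Defs.
From HB Require Import structures.
From mathcomp Require Import all_boot all_order all_algebra all_fingroup.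
From mathcomp Require Import complex reals.
From mathcomp Require Import mpoly.
Import GRing.Theory Num.Theory.
Set Implicit Arguments.
Unset Strict Implicit.
Unset Printing Implicit Defensive.
Local Open Scope ring_scope.

Section Good.
Variable C : numFieldType.

Definition goodf (g : C -> C) := exists q : {poly C}, forall t, g t = q.[t].

Lemma goodf_ext f g : goodf f -> f =1 g -> goodf g.
Proof. by move=> [q Hq] e; exists q => t; rewrite -e. Qed.

Lemma goodf_cst c : goodf (fun=> c).
Proof. by exists c%:P => t; rewrite hornerC. Qed.

Lemma goodf_id : goodf id.
Proof. by exists 'X => t; rewrite hornerX. Qed.

Lemma goodf_add f g : goodf f -> goodf g -> goodf (fun t => f t + g t).
Proof. by move=> [p Hp] [q Hq]; exists (p + q) => t; rewrite hornerD Hp Hq. Qed.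

Lemma goodf_opp f : goodf f -> goodf (fun t => - f t).
Proof. by move=> [p Hp]; exists (- p) => t; rewrite hornerN Hp. Qed.

Lemma goodf_mul f g : goodf f -> goodf g -> goodf (fun t => f t * g t).
Proof. by move=> [p Hp] [q Hq]; exists (p * q) => t; rewrite hornerM Hp Hq. Qed.

Lemma goodf_exp f k : goodf f -> goodf (fun t => f t ^+ k).
Proof.
move=> gf; elim: k => [|k IH]; first by refine (goodf_ext (goodf_cst 1) _); move=> t; rewrite expr0.
by refine (goodf_ext (goodf_mul gf IH) _); move=> t; rewrite exprS.
Qed.

Lemma goodf_sum (I : Type) (r : seq I) (P : pred I) (F : I -> C -> C) :
  (forall k, goodf (F k)) -> goodf (fun t => \sum_(k <- r | P k) F k t).
Proof.
move=> H; elim: r => [|k r IH].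
  by refine (goodf_ext (goodf_cst 0) _); move=> t; rewrite big_nil.
case: (boolP (P k)) => Pk.
  by refine (goodf_ext (goodf_add (H k) IH) _); move=> t; rewrite big_cons Pk.
by refine (goodf_ext IH _); move=> t; rewrite big_cons (negbTE Pk).
Qed.

Lemma goodf_prod (I : Type) (r : seq I) (P : pred I) (F : I -> C -> C) :
  (forall k, goodf (F k)) -> goodf (fun t => \prod_(k <- r | P k) F k t).
Proof.
move=> H; elim: r => [|k r IH].
  by refine (goodf_ext (goodf_cst 1) _); move=> t; rewrite big_nil.
case: (boolP (P k)) => Pk.
  by refine (goodf_ext (goodf_mul (H k) IH) _); move=> t; rewrite big_cons Pk.
by refine (goodf_ext IH _); move=> t; rewrite big_cons (negbTE Pk).
Qed.

Lemma meval_good (N : nat) (p : {mpoly C[N]}) (v w : 'I_N -> C) :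
  goodf (fun t => p.@[fun k => v k + t * w k]).
Proof.
have E : (fun t => \sum_(m <- msupp p) p@_m * \prod_i (v i + t * w i) ^+ m i) =1 (fun t => p.@[fun k => v k + t * w k]).
  by move=> t; rewrite mevalE.
refine (goodf_ext _ E).
apply: goodf_sum => m; apply: goodf_mul; first exact: goodf_cst.
apply: goodf_prod => i; apply: goodf_exp; apply: goodf_add; first exact: goodf_cst.
by apply: goodf_mul; [exact: goodf_id | exact: goodf_cst].
Qed.

Lemma poly_vanish (q : {poly C}) : (forall t, q.[t] = 0) -> q = 0.
Proof.
move=> H; apply/eqP; apply: contraT => nz.
have := max_poly_roots nz (rs := [seq i%:R | i <- iota 0 (size q)]).
rewrite size_map size_iota ltnn; apply.
  by apply/allP => x /mapP [i _ ->]; rewrite /root H.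
rewrite map_inj_uniq ?iota_uniq // => i j /eqP; by rewrite eqr_nat => /eqP.
Qed.

Variable n : nat.
Definition mgood (f : 'M[C]_n -> C) := forall Q Q', goodf (fun t => f (Q + t *: Q')).

Lemma char_poly_horner (Q : 'M[C]_n) t : (char_poly (- Q)).[t] = \det (Q + t *: 1%:M).
Proof.
rewrite /char_poly -horner_evalE -det_map_mx; congr (\det _).
apply/matrixP => i j; rewrite !mxE /=.
case: (i == j); rewrite /= ?mulr1n ?mulr0n ?mulr1 ?mulr0 horner_evalE ?hornerE opprK // addrC //.
Qed.

Lemma mgood_dense f : mgood f -> (forall Q, Q \in unitmx -> f Q = 0) -> forall Q, f Q = 0.
Proof.
move=> Hg H0 Q; have [q Hq] := Hg Q 1%:M.
have qc : q * char_poly (- Q) = 0.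
  apply: poly_vanish => t; rewrite hornerM char_poly_horner.
  case: (boolP (\det (Q + t *: 1%:M) == 0)) => [/eqP -> | nz]; first by rewrite mulr0.
  by rewrite -Hq H0 ?mul0r // unitmxE unitfE.
have : q = 0.
  move/eqP: qc; rewrite mulf_eq0 (negbTE (monic_neq0 (char_poly_monic _))) orbF.
  by move/eqP.
by move=> q0; have := Hq 0; rewrite scale0r addr0 q0 horner0.
Qed.
End Good.
Section Mgood.
Variable C : numFieldType.
Variable n : nat.
Implicit Types f g : 'M[C]_n -> C.

Lemma mgood_ext f g : mgood f -> f =1 g -> mgood g.
Proof. by move=> H e Q Q'; refine (goodf_ext (H Q Q') _) => t. Qed.

Lemma mgood_cst c : mgood (fun _ : 'M[C]_n => c).
Proof. by move=> Q Q'; exact: goodf_cst. Qed.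

Lemma mgood_add f g : mgood f -> mgood g -> mgood (fun Q => f Q + g Q).
Proof. by move=> H1 H2 Q Q'; apply: goodf_add. Qed.

Lemma mgood_opp f : mgood f -> mgood (fun Q => - f Q).
Proof. by move=> H1 Q Q'; apply: goodf_opp. Qed.

Lemma mgood_mul f g : mgood f -> mgood g -> mgood (fun Q => f Q * g Q).
Proof. by move=> H1 H2 Q Q'; apply: goodf_mul. Qed.

Lemma mgood_sum (I : Type) (r : seq I) (P : pred I) (F : I -> 'M[C]_n -> C) :
  (forall k, mgood (F k)) -> mgood (fun Q => \sum_(k <- r | P k) F k Q).
Proof. by move=> H Q Q'; apply: goodf_sum => k; apply: H. Qed.

Lemma mgood_compl (P : 'M[C]_n) f : mgood f -> mgood (fun Q => f (P *m Q)).
Proof.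
by move=> H Q Q'; refine (goodf_ext (H (P *m Q) (P *m Q')) _) => t; rewrite mulmxDr scalemxAr.
Qed.

Lemma mgood_compr (P : 'M[C]_n) f : mgood f -> mgood (fun Q => f (Q *m P)).
Proof.
by move=> H Q Q'; refine (goodf_ext (H (Q *m P) (Q' *m P)) _) => t; rewrite mulmxDl scalemxAl.
Qed.

Variable d : nat.

Lemma hpoly_mgood f : is_hpoly_fun d f -> mgood f.
Proof.
move=> [p [_ Hp]] Q Q'.
refine (goodf_ext (meval_good p (mx_vars Q) (mx_vars Q')) _) => t.
rewrite Hp; apply: meval_eq => k; by rewrite /mx_vars linearD linearZ /= !mxE.
Qed.

Lemma hpoly_ext f g : is_hpoly_fun d f -> f =1 g -> is_hpoly_fun d g.
Proof. by move=> [p [hp Hp]] e; exists p; split => // Q; rewrite -e. Qed.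

Lemma hpoly_cst0 : is_hpoly_fun d (fun _ : 'M[C]_n => 0 : C).
Proof. by exists 0; split; [exact: dhomog0 | move=> Q; rewrite meval0]. Qed.

Lemma hpoly_add f g : is_hpoly_fun d f -> is_hpoly_fun d g -> is_hpoly_fun d (fun Q => f Q + g Q).
Proof.
move=> [p [hp Hp]] [q [hq Hq]]; exists (p + q); split; first exact: dhomogD.
by move=> Q; rewrite mevalD Hp Hq.
Qed.

Lemma hpoly_scale c f : is_hpoly_fun d f -> is_hpoly_fun d (fun Q => c * f Q).
Proof.
move=> [p [hp Hp]]; exists (c *: p); split; first exact: dhomogZ.
by move=> Q; rewrite mevalZ Hp.
Qed.

Lemma hpoly_sum (I : Type) (r : seq I) (P : pred I) (F : I -> 'M[C]_n -> C) :
  (forall k, is_hpoly_fun d (F k)) -> is_hpoly_fun d (fun Q => \sum_(k <- r | P k) F k Q).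
Proof.
move=> H; elim: r => [|k r IH].
  by refine (hpoly_ext hpoly_cst0 _) => t; rewrite big_nil.
case: (boolP (P k)) => Pk.
  by refine (hpoly_ext (hpoly_add (H k) IH) _) => t; rewrite big_cons Pk.
by refine (hpoly_ext IH _) => t; rewrite big_cons (negbTE Pk).
Qed.

End Mgood.
Section Main.
Variable C : numFieldType.
Variables n d : nat.

Lemma gl_act_extl (U : glrep C n d) P Q : P \in unitmx ->
  gl_act U (P *m Q) = gl_act U P *m gl_act U Q.
Proof.
move=> HP; apply/matrixP => i j; apply/eqP; rewrite -subr_eq0; apply/eqP.
pose f := fun Q => gl_act U (P *m Q) i j - (gl_act U P *m gl_act U Q) i j.
have mf : mgood f.
  apply: mgood_add; first exact: (mgood_compl P (hpoly_mgood (gl_poly i j))).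
  apply: mgood_opp.
  apply: (@mgood_ext _ _ (fun Q => \sum_k gl_act U P i k * gl_act U Q k j)).
    apply: mgood_sum => k; apply: mgood_mul; first exact: mgood_cst.
    exact: hpoly_mgood (gl_poly k j).
  by move=> Q'; rewrite mxE.
by apply: (mgood_dense mf) => Q' HQ'; rewrite /f gl_actM // subrr.
Qed.

Lemma gl_act_extr (U : glrep C n d) P Q : P \in unitmx ->
  gl_act U (Q *m P) = gl_act U Q *m gl_act U P.
Proof.
move=> HP; apply/matrixP => i j; apply/eqP; rewrite -subr_eq0; apply/eqP.
pose f := fun Q => gl_act U (Q *m P) i j - (gl_act U Q *m gl_act U P) i j.
have mf : mgood f.
  apply: mgood_add; first exact: (mgood_compr P (hpoly_mgood (gl_poly i j))).
  apply: mgood_opp.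
  apply: (@mgood_ext _ _ (fun Q => \sum_k gl_act U Q i k * gl_act U P k j)).
    apply: mgood_sum => k; apply: mgood_mul; last exact: mgood_cst.
    exact: hpoly_mgood (gl_poly i k).
  by move=> Q'; rewrite mxE.
by apply: (mgood_dense mf) => Q' HQ'; rewrite /f gl_actM // subrr.
Qed.

Definition linT (U : glrep C n d) (V : snrep C n) (T : IndMap U V) :=
  forall (a : C) u v Q, T (a *: u + v) Q = a *: T u Q + T v Q.

Lemma lin_sum (U : glrep C n d) (V : snrep C n) (T : IndMap U V) : linT T ->
  forall Q (I : Type) (r : seq I) (a : I -> C) (w : I -> 'cV_(gl_dim U)),
  T (\sum_(k <- r) a k *: w k) Q = \sum_(k <- r) a k *: T (w k) Q.
Proof.
move=> lin Q I r a w; elim: r => [|k r IH].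
  rewrite !big_nil; have := lin 1 0 0 Q; rewrite !scale1r addr0 => /esym /eqP.
  by rewrite -subr_eq0 addrK => /eqP.
by rewrite !big_cons lin IH.
Qed.

Definition Phi (U : glrep C n d) (V : snrep C n) (T : IndMap U V) :
  'M[C]_(sn_dim V, gl_dim U) := \matrix_(i, j) T (delta_mx j 0) 1%:M i 0.

Lemma Phi_mul (U : glrep C n d) (V : snrep C n) (T : IndMap U V) : linT T ->
  forall u, Phi T *m u = T u 1%:M.
Proof.
move=> lin u.
have eu : u = \sum_j u j 0 *: delta_mx j 0.
  apply/matrixP => a b; rewrite (ord1 b) summxE (bigD1 a) //= big1 => [|j ja].
    by rewrite !mxE !eqxx mulr1 addr0.
  by rewrite !mxE eq_sym (negbTE ja) mulr0.
rewrite {2}eu lin_sum //; apply/matrixP => a b; rewrite (ord1 b) !mxE summxE.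
by apply: eq_bigr => j _; rewrite !mxE mulrC.
Qed.

Lemma mx_eq_mul p q (A B : 'M[C]_(p, q)) :
  (forall u : 'cV_q, A *m u = B *m u) -> A = B.
Proof.
move=> H; apply/matrixP => i j.
by have := congr1 (fun M : 'cV[C]_p => M i 0) (H (delta_mx j 0)); rewrite -!colE !mxE.
Qed.

End Main.
Section Main2.
Variable C : numFieldType.
Variables n d : nat.

Definition TB (U : glrep C n d) (V : snrep C n) (B : 'M[C]_(sn_dim V, gl_dim U)) :
  IndMap U V := fun u Q => B *m (gl_act U Q *m u).

Lemma TB_hom (U : glrep C n d) (V : snrep C n) (B : 'M[C]_(sn_dim V, gl_dim U)) :
  homSn_res B -> homGL_Ind (TB B).
Proof.
move=> HB; split.
- by move=> a u v Q; rewrite /TB mulmxDr scalemxAr mulmxDr scalemxAr.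
- move=> u; split.
  + move=> i.
    apply: (@hpoly_ext _ _ _ (fun Q => \sum_k B i k * \sum_j (u j 0 * gl_act U Q k j))).
      apply: hpoly_sum => k; apply: hpoly_scale; apply: hpoly_sum => j.
      exact: (hpoly_scale _ (gl_poly k j)).
    move=> Q; rewrite /TB !mxE; apply: eq_bigr => k _; rewrite !mxE; congr (_ * _).
    by apply: eq_bigr => j _; rewrite mulrC.
  + move=> s Q; rewrite /TB gl_act_extl ?unitmx_perm // !mulmxA.
    by rewrite -[gl_act U (perm_mx s)]/(res_act U s) HB.
- by move=> g u Hg Q; rewrite /TB /ind_act gl_act_extr // !mulmxA.
Qed.

Lemma Phi_TB (U : glrep C n d) (V : snrep C n) (B : 'M[C]_(sn_dim V, gl_dim U)) :
  Phi (TB B) = B.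
Proof. by apply/matrixP => i j; rewrite mxE /TB gl_act1 mul1mx -colE mxE. Qed.

Theorem main_gen :
  exists Phi : forall (U : glrep C n d) (V : snrep C n),
      IndMap U V -> 'M[C]_(sn_dim V, gl_dim U),
    (forall U V,
      [/\ forall T, homGL_Ind T -> homSn_res (Phi U V T),
          forall a T1 T2, homGL_Ind T1 -> homGL_Ind T2 ->
            Phi U V (indmap_comb a T1 T2) = a *: Phi U V T1 + Phi U V T2,
          forall T1 T2, homGL_Ind T1 -> homGL_Ind T2 ->
            Phi U V T1 = Phi U V T2 -> forall u Q, T1 u Q = T2 u Q
        & forall B, homSn_res B -> exists2 T, homGL_Ind T & Phi U V T = B])
    /\
    (forall (U' U : glrep C n d) (V V' : snrep C n)
            (A : 'M[C]_(gl_dim U, gl_dim U'))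
            (B : 'M[C]_(sn_dim V', sn_dim V)) (T : IndMap U V),
        homGL A -> homSn B -> homGL_Ind T ->
        Phi U' V' (indmap_comp A B T) = B *m Phi U V T *m A).
Proof.
exists (@Phi C n d); split => [U V|U' U V V' A B T _ _ [lT _ _]].
  split.
  - move=> T [lin inI hom] s; rewrite /res_act; apply: mx_eq_mul => u.
    rewrite -!mulmxA !Phi_mul // (hom _ _ (unitmx_perm _ s)) /ind_act mul1mx.
    by rewrite -{1}[perm_mx s]mulmx1 (proj2 (inI u)).
  - move=> a T1 T2 _ _; apply/matrixP => i j; by rewrite !mxE /indmap_comb.
  - move=> T1 T2 [l1 i1 h1] [l2 i2 h2] E u Q.
    have E1 : forall v, T1 v 1%:M = T2 v 1%:M by move=> v; rewrite -!Phi_mul // E.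
    have Eg : forall g, g \in unitmx -> T1 u g = T2 u g.
      move=> g Hg; have := h1 g u Hg 1%:M; have := h2 g u Hg 1%:M.
      by rewrite /ind_act mul1mx => <- <-; exact: E1.
    apply/matrixP => i j; rewrite (ord1 j); apply/eqP; rewrite -subr_eq0; apply/eqP.
    apply: (@mgood_dense _ _ (fun Q => T1 u Q i 0 - T2 u Q i 0)) => [|Q' HQ'];
      last by rewrite Eg // subrr.
    apply: mgood_add; first exact: hpoly_mgood ((proj1 (i1 u)) i).
    by apply: mgood_opp; exact: hpoly_mgood ((proj1 (i2 u)) i).
  - by move=> B HB; exists (TB B); [exact: TB_hom | exact: Phi_TB].
have linc : linT (indmap_comp A B T).
  move=> a u v Q; rewrite /indmap_comp /ind_map (mulmxDr A) -(scalemxAr a A) lT.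
  by rewrite mulmxDr -scalemxAr.
by apply: mx_eq_mul => u; rewrite Phi_mul // -!mulmxA Phi_mul.
Qed.
End Main2.

Theorem theorem2 (R : realType) (n d : nat) (hn : (0 < n)%N) :
  exists Phi : forall (U : glrep R[i] n d) (V : snrep R[i] n),
      IndMap U V -> 'M[R[i]]_(sn_dim V, gl_dim U),
    (forall U V,
      [/\ (* Phi maps Hom_GL(U, Ind^d V) into Hom_{S_n}(Res^d U, V) *)
          forall T, homGL_Ind T -> homSn_res (Phi U V T),
          (* linear *)
          forall a T1 T2, homGL_Ind T1 -> homGL_Ind T2 ->
            Phi U V (indmap_comb a T1 T2) = a *: Phi U V T1 + Phi U V T2,
          (* injective *)
          forall T1 T2, homGL_Ind T1 -> homGL_Ind T2 ->
            Phi U V T1 = Phi U V T2 -> forall u Q, T1 u Q = T2 u Q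
        & (* surjective *)
          forall B, homSn_res B -> exists2 T, homGL_Ind T & Phi U V T = B])
    /\
    (* naturality in U and V *)
    (forall (U' U : glrep R[i] n d) (V V' : snrep R[i] n)
            (A : 'M[R[i]]_(gl_dim U, gl_dim U'))
            (B : 'M[R[i]]_(sn_dim V', sn_dim V)) (T : IndMap U V),
        homGL A -> homSn B -> homGL_Ind T ->
        Phi U' V' (indmap_comp A B T) = B *m Phi U V T *m A).
Proof. exact: (@main_gen R[i] n d). Qed.
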